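(* Let $\mathbb{X}$ be a two-dimensional real Banach space. Then for any $x \in S_{\mathbb{X}}$ and any $\epsilon \in [0,1)$, there exists a normal cone $K$ in $\mathbb{X}$ such that $F(x,\epsilon) = K \cup (-K)$.
   Context: $S_{\mathbb{X}}=\{x\in\mathbb{X}:\|x\|=1\}$. For $x,y\in\mathbb{X}$ and $\epsilon\in[0,1)$, write $x \perp_D^{\epsilon} y$ if $\|x+\lambda y\| \geq \sqrt{1-\epsilon^2}\,\|x\|$ for all $\lambda\in\mathbb{R}$. Define $F(x,\epsilon)=\{y\in\mathbb{X} : x\perp_D^{\epsilon} y\}$. A subset $K\subseteq\mathbb{X}$ is a normal cone if (i) $K+K\subseteq K$, (ii) $\alpha K\subseteq K$ for all $\alpha\geq 0$, and (iii) $K\cap(-K)=\{0\}$. *)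

(* Defs.v *)
From HB Require Import structures.
From mathcomp Require Import all_boot all_order all_algebra.
From mathcomp Require Import all_classical all_reals all_analysis.
Set Implicit Arguments. Unset Strict Implicit. Unset Printing Implicit Defensive.
Import Order.TTheory GRing.Theory Num.Theory.
Import numFieldNormedType.Exports.
Local Open Scope classical_set_scope.
Local Open Scope ring_scope.

Definition dim2 (R : realType) (X : normedModType R) : Prop :=
  exists e1 e2 : X,
    (forall x : X, exists a b : R, x = a *: e1 + b *: e2) /\
    (forall a b : R, a *: e1 + b *: e2 = 0 -> a = 0 /\ b = 0).

Definition bj_eps_orth (R : realType) (X : normedModType R) (eps : R) (x y : X) : Prop :=
  forall lam : R, Num.sqrt (1 - eps ^+ 2) * `|x| <= `|x + lam *: y|.

Definition Fset (R : realType) (X : normedModType R) (x : X) (eps : R) : set X :=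
  [set y | bj_eps_orth eps x y].

Definition opp_set (R : realType) (X : normedModType R) (K : set X) : set X :=
  [set - y | y in K].

Definition normal_cone (R : realType) (X : normedModType R) (K : set X) : Prop :=
  (forall a b, K a -> K b -> K (a + b)) /\
  (forall (alpha : R) a, 0 <= alpha -> K a -> K (alpha *: a)) /\
  (K `&` opp_set K = [set 0]).

(* Main.v *)
Require Import Defs.
From HB Require Import structures.
From mathcomp Require Import all_boot all_order all_algebra.
From mathcomp Require Import all_classical all_reals all_analysis.
From mathcomp Require Import ring lra.
Import Order.TTheory GRing.Theory Num.Theory.
Import numFieldNormedType.Exports.
Local Open Scope classical_set_scope.
Local Open Scope ring_scope.

Section Coord.
Variables (R : realType) (X : normedModType R) (e1 e2 : X).
Hypothesis span : forall x : X, exists a b : R, x = a *: e1 + b *: e2.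
Hypothesis indep : forall a' b' : R, a' *: e1 + b' *: e2 = 0 -> a' = 0 /\ b' = 0.

Definition cu (y : X) : R := projT1 (cid (span y)).
Definition cv (y : X) : R := projT1 (cid (projT2 (cid (span y)))).

Lemma cuvE y : y = cu y *: e1 + cv y *: e2.
Proof. exact: (projT2 (cid (projT2 (cid (span y))))). Qed.

Lemma coordE a b y : y = a *: e1 + b *: e2 -> cu y = a /\ cv y = b.
Proof.
move=> Hy.
have := indep (cu y - a) (cv y - b).
rewrite !scalerBl addrACA -opprD -cuvE -Hy subrr => /(_ erefl) [/eqP h1 /eqP h2].
by split; apply/eqP; rewrite -subr_eq0.
Qed.

Lemma cuL r y w : cu (r *: y + w) = r * cu y + cu w.
Proof.
apply: (proj1 (@coordE (r * cu y + cu w) (r * cv y + cv w) (r *: y + w) _)).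
by rewrite {1}(cuvE y) {1}(cuvE w) scalerDr !scalerA !scalerDl addrACA.
Qed.
Lemma cvL r y w : cv (r *: y + w) = r * cv y + cv w.
Proof.
apply: (proj2 (@coordE (r * cu y + cu w) (r * cv y + cv w) (r *: y + w) _)).
by rewrite {1}(cuvE y) {1}(cuvE w) scalerDr !scalerA !scalerDl addrACA.
Qed.
End Coord.
Set Implicit Arguments. Unset Strict Implicit.
Section Main.
Variables (R : realType) (X : normedModType R) (x : X) (eps : R) (psi phi : X -> R).
Hypothesis nx : `|x| = 1.
Hypothesis he : 0 <= eps < 1.
Hypothesis psiL : forall r y w, psi (r *: y + w) = r * psi y + psi w.
Hypothesis phiL : forall r y w, phi (r *: y + w) = r * phi y + phi w.
Hypothesis psix : psi x = 1.
Hypothesis phix : phi x = 0.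
Hypothesis phi0E : forall y, phi y = 0 -> y = psi y *: x.

Let c := Num.sqrt (1 - eps ^+ 2).
Let F := Fset x eps.

Lemma c_gt0 : 0 < c.
Proof. rewrite /c sqrtr_gt0; case/andP: he => h1 h2; nra. Qed.

Lemma c_le1 : c <= 1.
Proof. rewrite /c -[leRHS]sqrtr1 ler_sqrt //; nra. Qed.

Lemma FE y : F y <-> forall lam, c <= `|x + lam *: y|.
Proof. by rewrite /F /Fset /bj_eps_orth /= nx mulr1. Qed.

Lemma F0 : F 0.
Proof. apply/FE => lam; rewrite scaler0 addr0 nx; exact: c_le1. Qed.

Lemma Fscale a y : 0 <= a -> F y -> F (a *: y).
Proof.
move=> ha /FE Hy; apply/FE => lam; rewrite scalerA; exact: Hy.
Qed.

Lemma Fopp y : F y -> F (- y).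
Proof.
move=> /FE Hy; apply/FE => lam; rewrite scalerN -scaleNr; exact: Hy.
Qed.

Lemma Fline a : F (a *: x) -> a = 0.
Proof.
move=> /FE Hy; apply/eqP; apply/negPn/negP => ha.
have := Hy (- a^-1); rewrite scalerA mulNr mulVf // scaleN1r subrr normr0.
by rewrite leNgt c_gt0.
Qed.

Lemma Fkey y a b : F y -> 1 <= a -> c <= `|a *: x + b *: y|.
Proof.
move=> /FE Hy ha.
have a0 : a != 0 by apply/negP => /eqP a0; rewrite a0 in ha; lra.
have -> : a *: x + b *: y = a *: (x + (b / a) *: y).
  by rewrite scalerDr scalerA mulrCA mulfV // mulr1.
rewrite normrZ; have := Hy (b / a); have := c_gt0.
have -> : `|a| = a by apply/normr_idP; lra.
move=> h1 h2; nra.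
Qed.

Lemma psiD y w : psi (y + w) = psi y + psi w.
Proof. by rewrite -[y]scale1r psiL mul1r scale1r. Qed.
Lemma phiD y w : phi (y + w) = phi y + phi w.
Proof. by rewrite -[y]scale1r phiL mul1r scale1r. Qed.
Lemma psi0 : psi 0 = 0.
Proof. have := psiD 0 0; rewrite addr0; lra. Qed.
Lemma phi0 : phi 0 = 0.
Proof. have := phiD 0 0; rewrite addr0; lra. Qed.
Lemma psiZ r y : psi (r *: y) = r * psi y.
Proof. by rewrite -[r *: y]addr0 psiL psi0 addr0. Qed.
Lemma phiZ r y : phi (r *: y) = r * phi y.
Proof. by rewrite -[r *: y]addr0 phiL phi0 addr0. Qed.
Lemma phiN y : phi (- y) = - phi y.
Proof. by rewrite -scaleN1r phiZ mulN1r. Qed.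

Lemma Fphi0 y : F y -> phi y = 0 -> y = 0.
Proof. move=> Fy /phi0E e; rewrite e in Fy *; by rewrite (Fline Fy) scale0r. Qed.

Lemma Fsum_one y s lam : F y -> 0 < phi y ->
  0 <= lam * psi s - lam * phi s * psi y / phi y ->
  c <= `|x + lam *: s|.
Proof.
move=> Fy py hD.
set beta := lam * phi s / phi y.
have pv : phi (x + lam *: s - beta *: y) = 0.
  rewrite -scaleNr addrC phiL phiD phiZ phix /beta; field; lra.
have := phi0E pv.
rewrite -scaleNr addrC psiL psiD psiZ psix => e.
have -> : x + lam *: s = (- beta * psi y + (1 + lam * psi s)) *: x + beta *: y.
  by rewrite -e scaleNr addrAC addNr add0r.
apply: (Fkey _ Fy).
suff : lam * psi s - lam * phi s * psi y / phi y = - beta * psi y + lam * psi s by lra.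
rewrite /beta; field; lra.
Qed.

Lemma main_abs : exists K, normal_cone K /\ F = K `|` opp_set K.
Proof.
exists [set y | F y /\ 0 <= phi y].
split; [split; [|split]|].
- move=> y1 y2 [F1 p1] [F2 p2].
  have [e1|n1] := eqVneq (phi y1) 0.
    by rewrite (Fphi0 F1 e1) add0r.
  have [e2|n2] := eqVneq (phi y2) 0.
    by rewrite (Fphi0 F2 e2) addr0.
  have q1 : 0 < phi y1 by rewrite lt_def n1.
  have q2 : 0 < phi y2 by rewrite lt_def n2.
  split; last by rewrite phiD; lra.
  apply/FE => lam.
  set D := fun y => lam * psi (y1 + y2) - lam * phi (y1 + y2) * psi y / phi y.
  have hs : phi y1 * D y1 + phi y2 * D y2 = 0.
    rewrite /D psiD phiD; field; lra.
  have [h|h] : 0 <= D y1 \/ 0 <= D y2.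
    have [h|h] := leP 0 (D y1); first by left.
    right; nra.
  + move: h; rewrite /D => h; exact: Fsum_one F1 q1 h.
  + rewrite [y1 + y2]addrC; move: h; rewrite /D [y1 + y2]addrC => h.
    exact: Fsum_one F2 q2 h.
- move=> a y ha [Fy py]; split; first exact: Fscale.
  rewrite phiZ; exact: mulr_ge0.
- apply/seteqP; split.
  + move=> y [[Fy py] [w [Fw pw] ew]].
    rewrite -ew phiN in py.
    have e0 : phi w = 0 by lra.
    by rewrite /= -ew (Fphi0 Fw e0) oppr0.
  + move=> y /= ->; split; first by split; [exact: F0 | rewrite phi0].
    exists 0; last by rewrite oppr0.
    by split; [exact: F0 | rewrite phi0].
- apply/seteqP; split.
  + move=> y Fy.
    have [h|h] := leP 0 (phi y); first by left.
    right; exists (- y); last by rewrite opprK.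
    split; first exact: Fopp.
    rewrite phiN; lra.
  + move=> y [[Fy _]|[w [Fw _] <-]] //.
    exact: Fopp.
Qed.
End Main.

Theorem theorem2p1 (R : realType) (X : completeNormedModType R) :
  dim2 X ->
  forall (x : X) (eps : R), `|x| = 1 -> 0 <= eps < 1 ->
  exists K : set X, normal_cone K /\ Fset x eps = K `|` opp_set K.
Proof.
move=> [e1 [e2 [span indep]]] x eps nx he.
pose u := @cu R X e1 e2 span; pose v := @cv R X e1 e2 span.
have uE : forall y, y = u y *: e1 + v y *: e2 by move=> y; exact: cuvE.
pose p := u x; pose q := v x; pose N := p ^+ 2 + q ^+ 2.
have NZ : N != 0.
  apply/negP => /eqP N0.
  have p0 : p = 0 by rewrite /N in N0; nra.
  have q0 : q = 0 by rewrite /N in N0; nra.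
  have x0 : x = 0 by rewrite (uE x) -/p -/q p0 q0 !scale0r addr0.
  by move: nx; rewrite x0 normr0 => /eqP; rewrite eq_sym oner_eq0.
pose psi y := (u y * p + v y * q) / N.
pose phi y := (v y * p - u y * q) / N.
have uL : forall r y w, u (r *: y + w) = r * u y + u w by move=> *; exact: cuL.
have vL : forall r y w, v (r *: y + w) = r * v y + v w by move=> *; exact: cvL.
apply: (@main_abs R X x eps psi phi nx he).
- by move=> r y w; rewrite /psi uL vL; ring.
- by move=> r y w; rewrite /phi uL vL; ring.
- rewrite /psi; have -> : u x * p + v x * q = N by rewrite /N /p /q; ring.
  exact: mulfV.
- rewrite /phi; have -> : v x * p - u x * q = 0 by rewrite /p /q; ring.
  exact: mul0r.
- move=> y; rewrite /phi => /eqP; rewrite mulf_eq0 invr_eq0 (negbTE NZ) orbF => /eqP h.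
  have E1 : psi y * p = u y.
    rewrite /psi mulrAC.
    have -> : (u y * p + v y * q) * p = u y * N + q * (v y * p - u y * q) by rewrite /N; ring.
    by rewrite h mulr0 addr0 mulfK.
  have E2 : psi y * q = v y.
    rewrite /psi mulrAC.
    have -> : (u y * p + v y * q) * q = v y * N - p * (v y * p - u y * q) by rewrite /N; ring.
    by rewrite h mulr0 subr0 mulfK.
  by rewrite {1}(uE x) scalerDr !scalerA -/p -/q E1 E2 -uE.
Qed.
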